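(* Let $\mathcal{G}$ be an additive arithmetical semigroup satisfying Axiom $A^{\#}$ (constants $c_{\mathcal{G}}>0$, $q>1$, $0\le\eta<1$) with norm $\|g\|=q^{\partial(g)}$. For integers $n,m\ge0$ let $$R(n,m)=\sum_{\substack{0\le\partial(g)\le n\\ d_-(g)>m}}\frac{\mu(g)}{\|g\|}.$$ Then $R(n,m)=O(1)$ uniformly for all $n,m\ge0$.
   Context: An additive arithmetical semigroup is a commutative monoid $\mathcal{G}$ (written additively, identity $e_{\mathcal{G}}$) freely generated by a countable set $\mathcal{P}$ of primes, with an additive degree map $\partial\colon\mathcal{G}\to\mathbb{Z}_{\ge0}$, $\partial(e_{\mathcal{G}})=0$, $\partial(P)>0$ for primes, finitely many elements of each degree. Axiom $A^{\#}$: $\#\{g:\partial(g)=n\}=c_{\mathcal{G}}q^n+O(q^{\eta n})$. $P\mid g$ means $g=P+r$. $d_-(g)=\min\{\partial(P):P\mid g\}$ for $g\ne e_{\mathcal{G}}$, and $e_{\mathcal{G}}$ is included in the sum defining $R(n,m)$ (convention $d_-(e_{\mathcal{G}})=\infty$). $\mu$ is the Möbius function on $\mathcal{G}$. *)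

(* Defs.v *)
From HB Require Import structures.
From mathcomp Require Import all_boot all_order all_algebra.
From mathcomp Require Import finmap multiset.
From mathcomp Require Import all_classical all_reals all_analysis.
Set Implicit Arguments. Unset Strict Implicit. Unset Printing Implicit Defensive.
Import Order.TTheory GRing.Theory Num.Theory.
Local Open Scope ring_scope.
Open Scope mset_scope.
Open Scope ring_scope.

(* The additive arithmetical semigroup is modelled as the free commutative
   monoid {mset P} on a countable set P of primes (identity = empty multiset,
   addition = multiset sum); the degree of a prime is given by deg. *)

Definition gdeg (P : countType) (deg : P -> nat) (g : {mset P}) : nat :=
  (\sum_(p <- g) deg p)%N.

Definition gmu (R : nzRingType) (P : countType) (g : {mset P}) : R :=
  if uniq (g : seq P) then (-1) ^+ size (g : seq P) else 0.

(* d_-(g) > m : every prime dividing g has degree > m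
   (vacuously true for the identity, i.e. d_-(e) = infinity) *)
Definition dminus_gt (P : countType) (deg : P -> nat) (m : nat) (g : {mset P}) : bool :=
  all (fun p => (m < deg p)%N) (g : seq P).

(* R(n,m) = sum over g with 0 <= deg g <= n and d_-(g) > m of mu(g)/||g||,
   ||g|| = q^deg g; enum k is a duplicate-free list of all elements of degree k. *)
Definition Rsum (R : realType) (P : countType) (deg : P -> nat)
  (enum : nat -> seq {mset P}) (q : R) (n m : nat) : R :=
  \sum_(k < n.+1) \sum_(g <- enum k | dminus_gt deg m g)
     gmu R g / q ^+ gdeg deg g.

(* Main.v *)
Require Import Defs.
From HB Require Import structures.
From mathcomp Require Import all_boot all_order all_algebra.
From mathcomp Require Import finmap multiset.
From mathcomp Require Import all_classical all_reals all_analysis.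
From mathcomp Require Import ring lra.
Import Order.TTheory GRing.Theory Num.Theory.
Local Open Scope ring_scope.
Open Scope mset_scope.
Open Scope ring_scope.
Lemma perm_msetD (P : countType) (A B : {mset P}) :
  perm_eq (A `+` B : seq P) ((A : seq P) ++ (B : seq P)).
Proof. by apply/allP => x _ /=; rewrite count_cat !count_mem_mset msetE2. Qed.

Lemma perm_mset1D (P : countType) (p : P) (A : {mset P}) :
  perm_eq (p +` A : seq P) (p :: (A : seq P)).
Proof. by rewrite (permPl (perm_msetD _ _ _)) enum_msetn. Qed.

Lemma gdegD (P : countType) (deg : P -> nat) (A B : {mset P}) :
  gdeg deg (A `+` B) = (gdeg deg A + gdeg deg B)%N.
Proof. by rewrite /gdeg (perm_big _ (perm_msetD _ A B)) big_cat. Qed.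

Lemma gdeg_sub (P : countType) (deg : P -> nat) (A B : {mset P}) :
  A `<=` B -> (gdeg deg A <= gdeg deg B)%N.
Proof. by move=> sAB; rewrite -(msetBDKC sAB) gdegD leq_addr. Qed.

Lemma gmu0 (R : realType) (P : countType) : gmu R (mset0 : {mset P}) = 1.
Proof. by rewrite /gmu enum_mset0. Qed.

Lemma uniq1D (P : countType) (p : P) (A : {mset P}) :
  uniq (p +` A : seq P) = (p \notin (A : seq P)) && uniq (A : seq P).
Proof. by rewrite (perm_uniq (perm_mset1D _ p A)). Qed.

Lemma gmu1D (R : realType) (P : countType) (p : P) (A : {mset P}) :
  p \notin (A : seq P) -> gmu R (p +` A) = - gmu R A.
Proof.
move=> pA; rewrite /gmu uniq1D pA /= (perm_size (perm_mset1D _ p A)) /=.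
by case: ifP => _; rewrite ?oppr0 // exprS mulN1r.
Qed.
Lemma restr_uniq (R : realType) (P : countType) (s : seq {mset P}) (C : pred {mset P}) :
  \sum_(d <- s | C d) gmu R d = \sum_(d <- s | C d && uniq (d : seq P)) gmu R d.
Proof.
rewrite (bigID (fun d : {mset P} => uniq (d : seq P))) /= [X in _ + X]big1 ?addr0 //.
by move=> d /andP[_ nu]; rewrite /gmu (negbTE nu).
Qed.

Lemma ie (R : realType) (P : countType) (deg : P -> nat) (m : nat)
  (g : {mset P}) (s : seq {mset P}) :
  uniq s -> (forall d, d `<=` g -> d \in s) ->
  \sum_(d <- s | dminus_gt deg m d && (d `<=` g)) gmu R d =
  if all (fun p => (deg p <= m)%N) (g : seq P) then 1 else 0.
Proof.
move=> us Hs.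
case: ifPn => Tg.
  have E : forall d, dminus_gt deg m d && (d `<=` g) = (d == mset0).
    move=> d; apply/idP/eqP.
      case/andP => Sd sub; apply/msetP => a; rewrite mset0E; apply/mset_eq0P.
      apply/negP => ad; have ag := msubset_subset sub ad.
      have h1 := allP Tg a ag; have h2 := allP Sd a ad.
      by rewrite /= ltnNge h1 in h2.
    by move=> ->; rewrite /dminus_gt enum_mset0 /= msub0set.
  rewrite (eq_bigl _ _ E) -big_filter.
  have -> : [seq d <- s | d == mset0] = [:: mset0].
    by apply: filter_pred1_uniq => //; apply: Hs; exact: msub0set.
  by rewrite big_seq1 gmu0.
have [p0 p0g p0big] := allPn Tg.
rewrite -ltnNge in p0big.
rewrite (bigID (fun d : {mset P} => p0 \in (d : seq P))) /=.
rewrite [X in X + _](restr_uniq R P) [X in _ + X](restr_uniq R P).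
rewrite -[X in X + _]big_filter -[X in _ + X]big_filter.
set L1 := seq.filter _ s; set L2 := seq.filter _ s.
have pe : perm_eq L1 (map (msetD [mset p0]) L2).
  apply: uniq_perm; first exact: filter_uniq.
    rewrite map_inj_uniq; first exact: filter_uniq.
    exact: (@can_inj _ _ (msetD [mset p0]) (fun B => B `\ p0) (msetD1K p0)).
  move=> x; rewrite mem_filter; apply/idP/mapP.
    case/andP => /andP [/andP [/andP [Sx subx] px] ux] xs.
    have xE : x = p0 +` (x `\ p0) by rewrite msetB1K.
    move: ux; rewrite xE uniq1D => /andP [pn un].
    exists (x `\ p0) => //.
    rewrite mem_filter pn un /=.
    have sub1 : x `\ p0 `<=` g := msubset_trans (msubD1set _ _) subx.
    rewrite sub1 Hs // !andbT.
    apply/allP => a ad; apply: (allP Sx).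
    exact: (msubset_subset (msubD1set x p0) ad).
  case=> d dL2 ->; move: dL2; rewrite mem_filter.
  move=> /andP [H ds]; move: H => /andP [H ud]; move: H => /andP [H pd]; move: H => /andP [Sd subd].
  have sub1 : p0 +` d `<=` g.
    apply/msubsetP => a; rewrite mset1DE.
    case: eqP => [->|_]; last by rewrite add0n (msubsetP subd).
    move/mset_eq0P: pd => ->; rewrite addn0.
    by rewrite -in_mset.
  rewrite uniq1D pd ud sub1 mset1D1 Hs //= andbT.
  by rewrite /dminus_gt (perm_all _ (perm_mset1D _ p0 d)) /= p0big !andbT.
rewrite (perm_big _ pe) big_map.
rewrite (eq_big_seq (fun d => - gmu R d)); first by rewrite sumrN addNr.
move=> d; rewrite mem_filter => /andP [/andP [/andP [_ pd] _] _].
exact: gmu1D.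
Qed.
Lemma count_sub (P : countType) (deg : P -> nat) (enum : nat -> seq {mset P})
  (enum_uniq : forall k, uniq (enum k))
  (enum_spec : forall k (g : {mset P}), (g \in enum k) = (gdeg deg g == k))
  (N j : nat) (d : {mset P}) :
  gdeg deg d = j -> (j <= N)%N ->
  size (enum (N - j)%N) = count (fun g => d `<=` g) (enum N).
Proof.
move=> dj jN; rewrite -size_filter.
rewrite -[LHS](size_map (msetD d)); apply: perm_size.
apply: uniq_perm => [||x].
- rewrite map_inj_uniq //; exact: (@can_inj _ _ (msetD d) (msetB^~ d) (msetDKB d)).
- exact: filter_uniq.
 rewrite mem_filter; apply/mapP/idP.
  case=> h; rewrite enum_spec => /eqP hdeg ->.
  rewrite enum_spec gdegD dj hdeg subnKC // eqxx andbT.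
  by apply/msubsetP => a; rewrite msetE2 leq_addr.
case/andP => sub; rewrite enum_spec => /eqP xdeg.
exists (x `\` d); last by rewrite msetBDKC.
rewrite enum_spec; apply/eqP.
move: xdeg; rewrite -{1}(msetBDKC sub) gdegD dj => <-.
by rewrite addKn.
Qed.
Lemma mem_fl (P : countType) (deg : P -> nat) (enum : nat -> seq {mset P})
  (enum_spec : forall k (g : {mset P}), (g \in enum k) = (gdeg deg g == k))
  (n : nat) (d : {mset P}) :
  (d \in flatten [seq enum j | j <- iota 0 n]) = (gdeg deg d < n)%N.
Proof.
apply/flattenP/idP.
  case=> s /mapP [j jin ->]; rewrite enum_spec => /eqP ->.
  by rewrite mem_iota in jin.
move=> lt; exists (enum (gdeg deg d)); last by rewrite enum_spec.
by apply/mapP; exists (gdeg deg d); rewrite // mem_iota.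
Qed.

Lemma uniq_fl (P : countType) (deg : P -> nat) (enum : nat -> seq {mset P})
  (enum_uniq : forall k, uniq (enum k))
  (enum_spec : forall k (g : {mset P}), (g \in enum k) = (gdeg deg g == k))
  (n : nat) : uniq (flatten [seq enum j | j <- iota 0 n]).
Proof.
elim: n => [//|n IH].
rewrite -addn1 iotaD map_cat flatten_cat cat_uniq IH /= cats0 enum_uniq andbT.
apply/hasPn => d; rewrite enum_spec => /eqP dn.
by rewrite (mem_fl _ _ _ enum_spec) dn add0n ltnn.
Qed.

Lemma conv_id (R : realType) (P : countType) (deg : P -> nat)
  (enum : nat -> seq {mset P})
  (enum_uniq : forall k, uniq (enum k))
  (enum_spec : forall k (g : {mset P}), (g \in enum k) = (gdeg deg g == k))
  (m N : nat) :
  \sum_(j < N.+1) (\sum_(d <- enum j | dminus_gt deg m d) gmu R d) *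
      (size (enum (N - j)%N))%:R
  = (count (fun g : {mset P} => all (fun p => (deg p <= m)%N) (g : seq P)) (enum N))%:R.
Proof.
transitivity (\sum_(j < N.+1) \sum_(d <- enum j | dminus_gt deg m d)
                 \sum_(g <- enum N | d `<=` g) gmu R d).
  apply: eq_bigr => j _; rewrite big_distrl /=.
  rewrite big_seq_cond [RHS]big_seq_cond; apply: eq_bigr => d /andP [].
  rewrite enum_spec => /eqP dj _.
  rewrite (count_sub _ _ _ enum_uniq enum_spec N _ _ dj); last by rewrite -ltnS.
  by rewrite big_const_seq iter_addr_0 mulr_natr.
rewrite (eq_bigr (fun j : 'I_N.+1 => \sum_(g <- enum N)
          \sum_(d <- enum j | dminus_gt deg m d && (d `<=` g)) gmu R d)); last first.
  by move=> j _; rewrite (exchange_big_dep xpredT).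
rewrite exchange_big /=.
rewrite -sum1_count natr_sum [RHS]big_mkcond /=.
apply: eq_big_seq => g; rewrite enum_spec => /eqP gN.
have -> : \sum_(j < N.+1) \sum_(d <- enum j | dminus_gt deg m d && (d `<=` g)) gmu R d
  = \sum_(d <- flatten [seq enum j | j <- iota 0 N.+1] | dminus_gt deg m d && (d `<=` g)) gmu R d.
  by rewrite big_flatten big_map -[iota 0 N.+1]/(index_iota 0 N.+1) big_mkord.
rewrite (ie _ _ _ _ _ _ (uniq_fl _ _ _ enum_uniq enum_spec _)).
  by case: ifP.
move=> d sub; rewrite (mem_fl _ _ _ enum_spec) ltnS -gN.
exact: gdeg_sub.
Qed.
Lemma geo_bound (R : realType) (a q : R) : 0 <= a -> a < q -> forall N : nat,
  \sum_(j < N.+1) q ^+ j * a ^+ (N - j)%N <= q / (q - a) * q ^+ N.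
Proof.
move=> a0 aq.
have q0 : 0 < q by apply: le_lt_trans aq.
have qa0 : 0 < q - a by rewrite subr_gt0.
have KE : q / (q - a) * (q - a) = q by rewrite divfK // gt_eqF.
elim=> [|N IH].
  rewrite big_ord1 subnn !expr0 mulr1 mulr1 ler_pdivlMr // mul1r.
  by rewrite lerBlDr lerDl.
rewrite big_ord_recr /= subnn expr0 mulr1.
have -> : \sum_(i < N.+1) q ^+ (widen_ord (leqnSn N.+1) i) * a ^+ (N.+1 - widen_ord (leqnSn N.+1) i)%N
   = a * \sum_(i < N.+1) q ^+ i * a ^+ (N - i)%N.
  rewrite mulr_sumr; apply: eq_bigr => i _ /=.
  rewrite subSn; last by rewrite -ltnS.
  by rewrite exprS mulrCA.
have step : a * \sum_(i < N.+1) q ^+ i * a ^+ (N - i)%N <= a * (q / (q - a) * q ^+ N).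
  by apply: ler_wpM2l.
apply: (le_trans (lerD step (lexx _))).
set K := q / (q - a).
have -> : K * q ^+ N.+1 = a * (K * q ^+ N) + (K * (q - a)) * q ^+ N.
  by rewrite exprS; ring.
by rewrite /K KE -exprS.
Qed.
Theorem lemma2p7 (R : realType) (P : countType) (deg : P -> nat)
  (deg_pos : forall p : P, (0 < deg p)%N)
  (enum : nat -> seq {mset P})
  (enum_uniq : forall k, uniq (enum k))
  (enum_spec : forall k (g : {mset P}), (g \in enum k) = (gdeg deg g == k))
  (c q eta : R) (c_pos : 0 < c) (q_gt1 : 1 < q) (eta_ge0 : 0 <= eta) (eta_lt1 : eta < 1)
  (axiomA : exists C : R, forall n : nat,
      `| (size (enum n))%:R - c * q ^+ n | <= C * q `^ (eta * n%:R)) :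
  exists B : R, forall n m : nat, `| Rsum deg enum q n m | <= B.
Proof.
have [C HC0] := axiomA.
have q0 : 0 < q by apply: lt_trans q_gt1.
set a := q `^ eta.
have a0 : 0 <= a := powR_ge0 _ _.
have HC : forall n, `|(size (enum n))%:R - c * q ^+ n| <= C * a ^+ n.
  by move=> n; have := HC0 n; rewrite powRrM powR_mulrn.
have C0 : 0 <= C.
  have h := HC 0%N; rewrite !expr0 !mulr1 in h; exact: le_trans (normr_ge0 _) h.
have aq : a < q.
  rewrite -ltr_ln ?posrE ?powR_gt0 // /a ln_powR gtr_pMl //.
  exact: ln_gt0.
have Gb : forall n, (size (enum n))%:R <= (c + C) * q ^+ n.
  move=> n.
  have h1 : (size (enum n))%:R - c * q ^+ n <= C * a ^+ n :=
    le_trans (ler_norm _) (HC n).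
  have h2 : a ^+ n <= q ^+ n by rewrite lerXn2r // ?nnegrE ?ltW.
  have h3 : C * a ^+ n <= C * q ^+ n by apply: ler_wpM2l.
  rewrite mulrDl; lra.
set K := q / (q - a).
exists ((c + C) * (1 + C * K) / c).
move=> n m.
set M := fun j => \sum_(d <- enum j | dminus_gt deg m d) gmu R d.
have RE : Rsum deg enum q n m = \sum_(j < n.+1) M j / q ^+ j.
  rewrite /Rsum; apply: eq_bigr => j _; rewrite /M mulr_suml.
  rewrite big_seq_cond [RHS]big_seq_cond; apply: eq_bigr => d /andP [].
  by rewrite enum_spec => /eqP ->.
have Mb : forall j, `|M j| <= (size (enum j))%:R.
  move=> j; apply: le_trans (ler_norm_sum _ _ _) _.
  rewrite -sum1_size natr_sum [X in _ <= X](bigID (dminus_gt deg m)) /=.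
  rewrite -[X in X <= _]addr0; apply: lerD; last by apply: sumr_ge0.
  apply: ler_sum => d _; rewrite /gmu; case: ifP => _.
    by rewrite normrX normrN normr1 expr1n.
  by rewrite normr0.
pose H : R := (count (fun g : {mset P} => all (fun p => (deg p <= m)%N) (g : seq P)) (enum n))%:R.
have CI := conv_id R P deg enum enum_uniq enum_spec m n.
set E := fun i => (size (enum i))%:R - c * q ^+ i.
have key : c * q ^+ n * Rsum deg enum q n m = H - \sum_(j < n.+1) M j * E (n - j)%N.
  rewrite RE /H -CI -sumrB mulr_sumr; apply: eq_bigr => j _.
  rewrite /E (exprB (ltn_ord j : (j <= n)%N)) ?unitfE ?gt_eqF ?exprn_gt0 //.
  rewrite /M /=; field; by rewrite expf_neq0 // gt_eqF.
have Hb : 0 <= H <= (size (enum n))%:R by rewrite ler0n ler_nat count_size.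
have Sb : `|\sum_(j < n.+1) M j * E (n - j)%N| <=
           (c + C) * C * (K * q ^+ n).
  apply: le_trans (ler_norm_sum _ _ _) _.
  apply: le_trans (_ : \sum_(j < n.+1) (c + C) * C * (q ^+ j * a ^+ (n - j)%N) <= _).
    apply: ler_sum => j _; rewrite normrM.
    have e1 : `|M j| <= (c + C) * q ^+ j := le_trans (Mb j) (Gb j).
    have e2 : `|E (n - j)%N| <= C * a ^+ (n - j)%N := HC _.
    have := ler_pM (normr_ge0 _) (normr_ge0 _) e1 e2.
    move/le_trans; apply; rewrite le_eqVlt; apply/orP; left; apply/eqP; ring.
  rewrite -mulr_sumr; apply: ler_wpM2l.
    by apply: mulr_ge0 => //; apply: addr_ge0 => //; apply: ltW.
  exact: geo_bound.
have qn0 : 0 < c * q ^+ n by apply: mulr_gt0 => //; apply: exprn_gt0.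
rewrite -(ler_pM2l qn0).
have -> : c * q ^+ n * `|Rsum deg enum q n m| = `|c * q ^+ n * Rsum deg enum q n m|.
  by rewrite normrM (ger0_norm (ltW qn0)).
rewrite key.
apply: le_trans (ler_normB _ _) _.
have HH : `|H| <= (c + C) * q ^+ n.
  case/andP: Hb => Hb1 Hb2; rewrite ger0_norm //; exact: le_trans Hb2 (Gb n).
have -> : c * q ^+ n * ((c + C) * (1 + C * K) / c) =
          (c + C) * q ^+ n + (c + C) * C * (K * q ^+ n).
  by field; rewrite gt_eqF.
exact: lerD.
Qed.
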